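(* The permutation representability problem is polynomial-time reducible to the group representability problem on trees.
   Context: Permutation representability problem: given a finite group $G$ (by its multiplication table) and an integer $n$ in unary, decide whether there is a nontrivial homomorphism from $G$ to the symmetric group $S_n$. Group representability problem on trees: given a finite group $G$ (by its multiplication table) and a finite tree $T$, decide whether there is a nontrivial homomorphism from $G$ to the automorphism group $\mathrm{Aut}(T)$ of $T$. *)

(* Defs.v *)
From mathcomp Require Import all_boot all_fingroup.
Set Implicit Arguments. Unset Strict Implicit. Unset Printing Implicit Defensive.

Definition sym := 'I_3.
Definition One : sym := @Ordinal 3 0 isT.
Definition Sep : sym := @Ordinal 3 1 isT.
Definition Stop : sym := @Ordinal 3 2 isT.

Definition enc_nat (k : nat) : seq sym := rcons (nseq k One) Sep.

Definition enc_tab (m : nat) (t : 'I_m -> 'I_m -> 'I_m) : seq sym :=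
  flatten [seq enc_nat (t i j) | i <- enum 'I_m, j <- enum 'I_m].

Definition enc_graph (k : nat) (E : seq ('I_k * 'I_k)) : seq sym :=
  enc_nat k ++ flatten [seq enc_nat e.1 ++ enc_nat e.2 | e : 'I_k * 'I_k <- E].

Definition is_group_table (m : nat) (t : 'I_m -> 'I_m -> 'I_m) : Prop :=
  (forall a b c, t (t a b) c = t a (t b c)) /\
  exists e : 'I_m, (forall a, t e a = a /\ t a e = a) /\
                   (forall a, exists b, t a b = e /\ t b a = e).

(* nontrivial homomorphism from the table group into a set A of permutations
   (A will be a subgroup: S_n itself or Aut(T)) *)
Definition nontrivial_hom_into (m : nat) (t : 'I_m -> 'I_m -> 'I_m)
    (T : finType) (A : {set {perm T}}) : Prop :=
  exists phi : 'I_m -> {perm T},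
    (forall a, phi a \in A) /\
    (forall a b, phi (t a b) = phi a * phi b)%g /\
    (exists a, phi a != 1%g).

Definition adj_of (k : nat) (E : seq ('I_k * 'I_k)) : rel 'I_k :=
  fun u v => ((u, v) \in E) || ((v, u) \in E).

Definition is_tree (k : nat) (E : seq ('I_k * 'I_k)) : Prop :=
  0 < k /\
  (forall u, ~~ adj_of E u u) /\
  (forall u v, connect (adj_of E) u v) /\
  (forall c : seq 'I_k, uniq c -> 2 < size c -> ~~ path.cycle (adj_of E) c).

Definition Aut_graph (k : nat) (E : seq ('I_k * 'I_k)) : {set {perm 'I_k}} :=
  [set s : {perm 'I_k} | [forall u, forall v, adj_of E (s u) (s v) == adj_of E u v]].

(* Instances not of the described form are no-instances. *)
Definition PermRep (w : seq sym) : Prop :=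
  exists (m : nat) (t : 'I_m -> 'I_m -> 'I_m) (n : nat),
    w = enc_tab t ++ Stop :: nseq n One /\
    is_group_table t /\ nontrivial_hom_into t [set: {perm 'I_n}].

Definition TreeRep (w : seq sym) : Prop :=
  exists (m : nat) (t : 'I_m -> 'I_m -> 'I_m) (k : nat) (E : seq ('I_k * 'I_k)),
    w = enc_tab t ++ Stop :: enc_graph E /\
    is_group_table t /\ is_tree E /\ nontrivial_hom_into t (Aut_graph E).

Inductive move := MoveL | MoveR | Stay.

Record TM := {
  tm_state : finType;
  tm_work : finType;           (* extra (non-output) tape symbols *)
  tm_start : tm_state;
  (* None as result = halt; tape cells are option (sym + work), None = blank *)
  tm_delta : tm_state -> option (sym + tm_work) ->
             option (tm_state * option (sym + tm_work) * move)
}.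

(* configuration: state, cells left of head (nearest first), cells from head rightwards *)
Definition config (M : TM) : Type :=
  (tm_state M * seq (option (sym + tm_work M)) * seq (option (sym + tm_work M)))%type.

Definition init_config (M : TM) (w : seq sym) : config M :=
  (tm_start M, [::], [seq Some (inl x) | x <- w]).

Definition cur_symbol (M : TM) (c : config M) : option (sym + tm_work M) :=
  head None c.2.

Definition step (M : TM) (c : config M) : option (config M) :=
  let: (q, l, r) := c in
  match tm_delta q (head None r) with
  | None => None
  | Some (q', x, mv) =>
      let r' := x :: behead r in
      Some (match mv with
            | Stay => (q', l, r')
            | MoveR => (q', x :: l, behead r')
            | MoveL => (q', behead l, head None l :: r')
            end)
  end.

Fixpoint run (M : TM) (k : nat) (c : config M) : option (config M) :=
  if k is k'.+1 then obind (@run M k') (@step M c) else Some c.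

Definition tape_output (M : TM) (c : config M) : seq sym :=
  pmap (fun x : option (sym + tm_work M) =>
          if x is Some (inl s) then Some s else None) (catrev c.1.2 c.2).

Definition halts_with (M : TM) (w : seq sym) (k : nat) (y : seq sym) : Prop :=
  exists c : config M, @run M k (init_config M w) = Some c /\ @step M c = None /\ @tape_output M c = y.

Definition poly_reducible (L1 L2 : seq sym -> Prop) : Prop :=
  exists (M : TM) (a d : nat),
    forall w, exists (k : nat) (y : seq sym),
      halts_with M w k y /\ k <= a * size w ^ d + a /\ (L1 w <-> L2 y).

(* Main.v *)
From HB Require Import structures.
Require Import Defs.
From mathcomp Require Import all_boot all_fingroup.
From mathcomp Require Import zify.
Set Implicit Arguments. Unset Strict Implicit. Unset Printing Implicit Defensive.


Lemma enc_nat_dec a b s s' : enc_nat a ++ s = enc_nat b ++ s' -> a = b /\ s = s'.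
Proof.
elim: a b => [|a IH] [|b] /=.
- by case=> ->.
- by case.
- by case.
- by case=> /IH [-> ->].
Qed.

Lemma enc_nat_nil a s : enc_nat a ++ s <> [::].
Proof. by case: a. Qed.

Lemma notStop_enc_nat k : Stop \notin enc_nat k.
Proof. by elim: k => [|k IH] //=; rewrite inE negb_or IH andbT. Qed.

Lemma notStop_flatten (S : seq (seq sym)) :
  (forall s, s \in S -> Stop \notin s) -> Stop \notin flatten S.
Proof.
move=> H; apply/negP => /flattenP [s sS Ss].
by move: (H s sS); rewrite Ss.
Qed.

Lemma notStop_tab m (t : 'I_m -> 'I_m -> 'I_m) : Stop \notin enc_tab t.
Proof.
apply: notStop_flatten => s /flattenP [s' /mapP [i _ ->]] /mapP [j _ ->].
exact: notStop_enc_nat.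
Qed.

Lemma split_stop (p1 p2 s1 s2 : seq sym) :
  p1 ++ Stop :: s1 = p2 ++ Stop :: s2 -> Stop \notin p1 -> Stop \notin p2 ->
  p1 = p2 /\ s1 = s2.
Proof.
elim: p1 p2 => [|x p1 IH] [|y p2] /=.
- by case.
- by case=> <- _ _; rewrite inE eqxx.
- by case=> -> _; rewrite inE eqxx.
- case=> -> /IH h; rewrite !inE !negb_or => /andP[_ h1] /andP[_ h2].
  by case: (h h1 h2) => -> ->.
Qed.

Lemma edges_inj k (E1 E2 : seq ('I_k * 'I_k)) :
  flatten [seq enc_nat e.1 ++ enc_nat e.2 | e : 'I_k * 'I_k <- E1] =
  flatten [seq enc_nat e.1 ++ enc_nat e.2 | e : 'I_k * 'I_k <- E2] -> E1 = E2.
Proof.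
elim: E1 E2 => [|[a b] E1 IH] [|[c d] E2] //=.
- by rewrite -catA => /esym /enc_nat_nil.
- by rewrite -catA => /enc_nat_nil.
- rewrite -!catA => /enc_nat_dec [/val_inj -> /enc_nat_dec [/val_inj -> /IH ->]].
  by [].
Qed.

Definition star (n : nat) : seq ('I_n.+1 * 'I_n.+1) :=
  [seq (ord0, inord j) | j <- iota 1 n].

Lemma graph_star_dec k (E : seq ('I_k * 'I_k)) n (P : forall k, seq ('I_k * 'I_k) -> Prop) :
  enc_graph E = enc_graph (star n) -> P k E -> P n.+1 (star n).
Proof.
rewrite /enc_graph => /enc_nat_dec [ek]; subst k => /edges_inj -> //.
Qed.

Lemma graph_one_dec k (E : seq ('I_k * 'I_k)) :
  enc_graph E = [:: One; Sep] -> k = 1.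
Proof.
by rewrite /enc_graph -[[:: One; Sep]]cats0 => /(@enc_nat_dec k 1) [].
Qed.


Lemma mem_star n (u v : 'I_n.+1) :
  ((u, v) \in star n) = (u == ord0) && (v != ord0).
Proof.
apply/idP/idP.
  case/mapP=> j; rewrite mem_iota => /andP[j1 jn] [-> ->]; rewrite eqxx /=.
  apply/eqP => /(congr1 val); rewrite /= inordK; last by rewrite -add1n.
  by move=> j0; rewrite j0 in j1.
case/andP => /eqP -> v0; apply/mapP; exists (val v); last by rewrite inord_val.
rewrite mem_iota lt0n; apply/andP; split.
  by apply: contra v0 => /eqP h; apply/eqP/val_inj.
by rewrite addnC addn1 ltn_ord.
Qed.

Lemma adj_star n (u v : 'I_n.+1) :
  adj_of (star n) u v = ((u == ord0) != (v == ord0)).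
Proof.
rewrite /adj_of !mem_star.
by case: (u == ord0); case: (v == ord0).
Qed.

Lemma star_tree n : is_tree (star n).
Proof.
split; first by [].
split; first by move=> u; rewrite adj_star eqxx.
split.
  have h0 : forall u : 'I_n.+1, connect (adj_of (star n)) ord0 u.
    move=> u; case: (eqVneq u ord0) => [->|hu]; first exact: connect0.
    by apply: connect1; rewrite adj_star eqxx eq_sym (negbTE hu).
  move=> u v; apply: connect_trans (h0 v).
  case: (eqVneq u ord0) => [->|hu]; first exact: connect0.
  by apply: connect1; rewrite adj_star eqxx (negbTE hu).
move=> c; case: c => [|x [|y [|z r]]] //= Hu _.
rewrite /path.cycle /= !adj_star.
move: Hu => /=; rewrite !inE !negb_or => /and4P[/and3P[xy xz xr] /andP[yz yr] _ _].
case: (eqVneq x ord0) => [ex|nx] /=.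
  subst x. have ny : y != ord0 by rewrite eq_sym.
  have nz : z != ord0 by rewrite eq_sym.
  by rewrite (negbTE ny) (negbTE nz).
case: (eqVneq y ord0) => [ey|ny] //=.
subst y. have nz : z != ord0 by rewrite eq_sym.
rewrite (negbTE nz) /=.
case: r xr yr => [|u r] /= xr yr; rewrite !adj_star; first by rewrite (negbTE nx) (negbTE nz).
case: (eqVneq u ord0) => [eu|nu]; first by subst u; rewrite inE eqxx in yr.
by rewrite (negbTE nz).
Qed.

Lemma aut_star n (p : {perm 'I_n.+3}) :
  (p \in Aut_graph (star n.+2)) = (p ord0 == ord0).
Proof.
rewrite inE; apply/forallP/idP.
  move=> H; apply/negPn/negP => h0.
  have k1 : forall v : 'I_n.+3, v != ord0 -> p v == ord0.
    move=> v hv; move/forallP: (H ord0) => /(_ v) /eqP.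
    rewrite !adj_star eqxx hv (negbTE h0) /=.
    by case: (p v == ord0).
  have a1 : (lift ord0 (ord0 : 'I_n.+2)) != ord0 by rewrite eq_sym neq_lift.
  have a2 : (lift ord0 (ord_max : 'I_n.+2)) != ord0 by rewrite eq_sym neq_lift.
  move: (k1 _ a1) (k1 _ a2) => /eqP e1 /eqP e2.
  have E : lift ord0 (ord0 : 'I_n.+2) = lift ord0 ord_max by apply: (@perm_inj _ p); rewrite e1 e2.
  have := lift_inj E => /(congr1 val) /=.
  by [].
move=> /eqP H u; apply/forallP => v; rewrite !adj_star.
have E : forall x : 'I_n.+3, (p x == ord0) = (x == ord0).
  by move=> x; rewrite -{1}H (inj_eq perm_inj).
by rewrite !E.
Qed.

Section Restr.
Variable n : nat.
Variable p : {perm 'I_n.+1}.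
Hypothesis p0 : p ord0 = ord0.

Definition restr_fun (k : 'I_n) : 'I_n := odflt k (unlift ord0 (p (lift ord0 k))).

Lemma restr_funE k : lift ord0 (restr_fun k) = p (lift ord0 k).
Proof.
rewrite /restr_fun; case: unliftP => [j -> //|].
by rewrite -{2}p0 => /perm_inj /eqP; rewrite eq_sym (negbTE (neq_lift _ _)).
Qed.

Lemma restr_inj : injective restr_fun.
Proof.
move=> a b e; apply: (@lift_inj _ ord0); apply: (@perm_inj _ p).
by rewrite -!restr_funE e.
Qed.

Definition restr : {perm 'I_n} := perm restr_inj.

Lemma lift_restr : lift_perm ord0 ord0 restr = p.
Proof.
apply/permP => x; case: (unliftP ord0 x) => [j ->|->].
  by rewrite lift_perm_lift permE restr_funE.
by rewrite lift_perm_id p0.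
Qed.
End Restr.

Lemma lift_perm_inj n : injective (@lift_perm n ord0 ord0).
Proof.
move=> s1 s2 e; apply/permP => k; apply: (@lift_inj _ ord0).
by rewrite -!(@lift_perm_lift _ ord0 ord0) e.
Qed.

Lemma nontriv_star m (t : 'I_m -> 'I_m -> 'I_m) n :
  nontrivial_hom_into t [set: {perm 'I_n.+2}] <->
  nontrivial_hom_into t (Aut_graph (star n.+2)).
Proof.
split.
  case=> phi [_ [hom [a na]]].
  exists (fun a => lift_perm ord0 ord0 (phi a)); split.
    by move=> b; rewrite aut_star lift_perm_id.
  split; first by move=> b c; rewrite hom lift_permM.
  exists a; apply: contra na => /eqP e; apply/eqP.
  by apply: lift_perm_inj; rewrite e lift_perm1.
case=> psi [inA [hom [a na]]].
have fix0 : forall b, psi b ord0 = ord0 by move=> b; apply/eqP; rewrite -aut_star.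
exists (fun b => restr (fix0 b)); split; first by move=> b; rewrite inE.
split.
  move=> b c; apply: lift_perm_inj.
  by rewrite -(@lift_permM _ ord0 ord0 ord0) !lift_restr hom.
exists a; apply: contra na => /eqP e; apply/eqP.
by rewrite -(lift_restr (fix0 a)) e lift_perm1.
Qed.

Lemma perm_small n (p : {perm 'I_n}) : n <= 1 -> p = 1%g.
Proof.
move=> hn; apply/permP => x; rewrite perm1; apply: val_inj.
have h (y : 'I_n) : val y = 0 by apply/eqP; rewrite -leqn0 -ltnS (leq_trans (ltn_ord y) hn).
by rewrite !h.
Qed.

Lemma nontriv_small m (t : 'I_m -> 'I_m -> 'I_m) n (A : {set {perm 'I_n}}) :
  n <= 1 -> ~ nontrivial_hom_into t A.
Proof. by move=> hn [phi [_ [_ [a]]]]; rewrite (perm_small (phi a) hn) eqxx. Qed.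


Inductive st := A | S0 | S1 | S2 | J | T1 | Hlt | F | WS | GC | C2 | WO | GR | Rst | WS2 | GF | GFin | Fin.

Definition st2n (s : st) : nat :=
  match s with A => 0 | S0 => 1 | S1 => 2 | S2 => 3 | J => 4 | T1 => 5 | Hlt => 6
  | F => 7 | WS => 8 | GC => 9 | C2 => 10 | WO => 11 | GR => 12 | Rst => 13
  | WS2 => 14 | GF => 15 | GFin => 16 | Fin => 17 end.
Definition n2st (n : nat) : st :=
  match n with 0 => A | 1 => S0 | 2 => S1 | 3 => S2 | 4 => J | 5 => T1 | 6 => Hlt
  | 7 => F | 8 => WS | 9 => GC | 10 => C2 | 11 => WO | 12 => GR | 13 => Rst
  | 14 => WS2 | 15 => GF | 16 => GFin | _ => Fin end.
Definition st2o (s : st) : 'I_18 := inord (st2n s).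
Definition o2st (i : 'I_18) : st := n2st i.
Lemma st2oK : cancel st2o o2st.
Proof. by case; rewrite /o2st /st2o inordK. Qed.
HB.instance Definition _ := Finite.copy st (can_type st2oK).

Definition work := 'I_4.
Definition cell := option (sym + work).
Definition wk (k : nat) (h : k < 4) : cell := Some (inr (Ordinal h)).
Notation ca := (@wk 0 isT).
Notation cb := (@wk 1 isT).
Notation cc := (@wk 2 isT).
Notation cx := (@wk 3 isT).
Notation co := (Some (inl One) : cell).
Notation csp := (Some (inl Sep) : cell).
Notation cst := (Some (inl Stop) : cell).

Definition res := option (st * cell * move).

Definition goL (tgt q : st) (x : cell) : res :=
  match x with
  | Some (inl s) => if val s == 2 then Some (tgt, x, MoveR) else Some (q, x, MoveL)
  | _ => Some (q, x, MoveL)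
  end.

Definition goR (q : st) (y : cell) (tgt : st) (x : cell) : res :=
  match x with
  | None => Some (tgt, y, MoveL)
  | _ => Some (q, x, MoveR)
  end.

Definition delta (q : st) (x : cell) : res :=
  match q with
  | A => match x with
         | Some (inl s) => if val s == 2 then Some (S0, x, MoveR) else Some (A, x, MoveR)
         | _ => None end
  | S0 => match x with
          | None => Some (T1, co, MoveR)
          | Some (inl s) => if val s == 0 then Some (S1, ca, MoveR) else Some (J, cx, MoveR)
          | _ => Some (J, cx, MoveR) end
  | S1 => match x with
          | None => Some (T1, co, MoveR)
          | Some (inl s) => if val s == 0 then Some (S2, ca, MoveR) else Some (J, cx, MoveR)
          | _ => Some (J, cx, MoveR) end
  | S2 => match x with
          | None => Some (WS2, co, MoveR)
          | Some (inl s) => if val s == 0 then Some (S2, ca, MoveR) else Some (J, cx, MoveR)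
          | _ => Some (J, cx, MoveR) end
  | J => match x with
         | None => Some (T1, co, MoveR)
         | _ => Some (J, cx, MoveR) end
  | T1 => Some (Hlt, csp, MoveR)
  | Hlt => None
  | F => match x with
         | Some (inr w) => if val w == 1 then Some (F, x, MoveR)
                           else if val w == 0 then Some (WS, cb, MoveR) else None
         | Some (inl _) => Some (GFin, x, Stay)
         | None => None end
  | WS => goR WS csp GC x
  | WO => goR WO co GC x
  | WS2 => goR WS2 csp GF x
  | GC => goL C2 GC x
  | GR => goL Rst GR x
  | GF => goL F GF x
  | GFin => goL Fin GFin x
  | C2 => match x with
          | Some (inr w) => if val w == 2 then Some (C2, x, MoveR)
                            else if val w == 1 then Some (WO, cc, MoveR)
                            else Some (GR, x, Stay)
          | _ => Some (GR, x, Stay) end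
  | Rst => match x with
           | Some (inr w) => if val w == 2 then Some (Rst, cb, MoveR)
                             else Some (WS2, x, Stay)
           | _ => Some (WS2, x, Stay) end
  | Fin => match x with
           | Some (inr w) => if val w == 1 then Some (Fin, co, MoveR) else None
           | _ => None end
  end.

Definition M : TM := {| tm_state := st; tm_work := work; tm_start := A; tm_delta := delta |}.


Definition cfg := (st * seq cell * seq cell)%type.
Definition stp (c : cfg) : option cfg := @step M c.
Definition rn (k : nat) (c : cfg) : option cfg := @run M k c.

Lemma rn_add k1 k2 c : rn (k1 + k2) c = obind (rn k2) (rn k1 c).
Proof.
rewrite /rn; elim: k1 c => [|k1 IH] c //=.
case: (@step M c) => [c'|] //=.
Qed.

Definition reach (c c' : cfg) (b : nat) := exists k, k <= b /\ rn k c = Some c'.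

Lemma reach_trans c1 c2 c3 b1 b2 : reach c1 c2 b1 -> reach c2 c3 b2 -> reach c1 c3 (b1 + b2).
Proof.
case=> k1 [h1 e1] [k2 [h2 e2]]; exists (k1 + k2); split; first exact: leq_add.
by rewrite rn_add e1.
Qed.

Lemma reach_le c c' b b' : b <= b' -> reach c c' b -> reach c c' b'.
Proof. by move=> hb [k [hk e]]; exists k; split => //; apply: leq_trans hb. Qed.

Lemma reach_refl c : reach c c 0.
Proof. by exists 0. Qed.

Lemma reach_step c c' : stp c = Some c' -> reach c c' 1.
Proof. by move=> e; exists 1; split => //; rewrite /rn /= -/(stp c) e. Qed.

Lemma reach_step_trans c c' c'' b : stp c = Some c' -> reach c' c'' b -> reach c c'' b.+1.
Proof. by move=> e h; rewrite -add1n; apply: reach_trans h; apply: reach_step. Qed.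

Lemma move_right q f (s : seq cell) l r :
  (forall x, x \in s -> delta q x = Some (q, f x, MoveR)) ->
  reach (q, l, s ++ r) (q, catrev (map f s) l, r) (size s).
Proof.
elim: s l => [|x s IH] l H /=; first exact: reach_refl.
apply: (@reach_step_trans _ (q, f x :: l, s ++ r)).
  by rewrite /stp /step /= (H x (mem_head _ _)).
by apply: IH => y ys; apply: H; rewrite inE ys orbT.
Qed.

Lemma move_left q (s : seq cell) x0 l r :
  (forall x, x \in belast x0 s -> delta q x = Some (q, x, MoveL)) ->
  reach (q, s ++ l, x0 :: r) (q, l, catrev s (x0 :: r)) (size s).
Proof.
elim: s x0 r => [|y s IH] x0 r H /=; first exact: reach_refl.
apply: (@reach_step_trans _ (q, s ++ l, y :: x0 :: r)).
  by rewrite /stp /step /= (H x0 (mem_head _ _)).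
by apply: IH => z zs; apply: H; rewrite /= inE zs orbT.
Qed.

Definition ns (x : cell) := x != cst.

Lemma goL_ns tgt q x : ns x -> goL tgt q x = Some (q, x, MoveL).
Proof.
by case: x => [[[[|[|[|?]]] ?]|?]|] //=; rewrite /ns /=; case: ifP.
Qed.

Lemma bounce G tgt (T : seq cell) x L r :
  (forall y, delta G y = goL tgt G y) ->
  all ns (x :: T) ->
  reach (G, rev T ++ cst :: L, x :: r) (tgt, cst :: L, T ++ x :: r) (size T + 2).
Proof.
move=> HG Hns.
have e : rev T ++ cst :: L = rcons (rev T) cst ++ L by rewrite -cats1 -catA.
rewrite e addn2; apply: (@reach_le _ _ ((size T).+1 + 1)); first by rewrite addn1.
apply: (@reach_trans _ (G, L, cst :: T ++ x :: r)).
  have -> : (size T).+1 = size (rcons (rev T) cst) by rewrite size_rcons size_rev.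
  have -> : cst :: T ++ x :: r = catrev (rcons (rev T) cst) (x :: r).
    by rewrite catrevE rev_rcons revK.
  apply: move_left => y; rewrite belast_rcons inE mem_rev => hy.
  rewrite HG goL_ns //; case/orP: hy => [/eqP ->|hy].
    by move/andP: Hns => [].
  by move/andP: Hns => [_ /allP]; apply.
by apply: reach_step; rewrite /stp /step /= HG.
Qed.

Lemma append Go G tgt y (T r : seq cell) L :
  (forall x, delta Go x = goR Go y G x) ->
  (forall x, delta G x = goL tgt G x) ->
  all (fun x => x != None) r -> all ns (T ++ r) -> T ++ r != [::] ->
  reach (Go, rev T ++ cst :: L, r) (tgt, cst :: L, rcons (T ++ r) y)
        (size r + size (T ++ r) + 2).
Proof.
move=> HGo HG Hr Hns Hne.
apply: (@reach_le _ _ (size r + (size (T ++ r)).+2)); first by rewrite -addnA addn2.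
apply: (@reach_trans _ (Go, rev (T ++ r) ++ cst :: L, [::])).
  have := @move_right Go id r (rev T ++ cst :: L) [::].
  rewrite map_id cats0 catrevE rev_cat -catA; apply => x xr.
  by rewrite HGo; case: x xr Hr => // xr /allP /(_ _ xr).
move: Hns Hne; case/lastP: (T ++ r) => [|U u] // Hns _.
rewrite rev_rcons size_rcons.
apply: (@reach_step_trans _ (G, rev U ++ cst :: L, [:: u; y])).
  by rewrite /stp /step /= HGo.
rewrite -!cats1 -catA /= -addn2; apply: bounce => //.
by move: Hns; rewrite all_rcons.
Qed.

Definition inj (s : sym) : cell := Some (inl s).
Definition Eseq i : seq sym := flatten [seq Sep :: rcons (nseq j One) Sep | j <- iota 1 i].
Definition outc i : seq cell := map inj (One :: Sep :: Eseq i).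

Lemma Eseq_S i : Eseq i.+1 = Eseq i ++ Sep :: rcons (nseq i.+1 One) Sep.
Proof.
by rewrite /Eseq -[i.+1]addn1 iotaD map_cat flatten_cat /= cats0 add0n addn1.
Qed.

Lemma outc_S i : outc i.+1 = outc i ++ csp :: nseq i.+1 co ++ [:: csp].
Proof.
rewrite /outc Eseq_S /= map_cat /= map_rcons map_nseq -cats1.
by [].
Qed.

Lemma size_Eseq i : size (Eseq i) <= i * (i + 2).
Proof.
elim: i => [|i IH] //; rewrite Eseq_S size_cat /= size_rcons size_nseq.
nia.
Qed.

Lemma Stop_Eseq i : Stop \notin Eseq i.
Proof.
apply: notStop_flatten => s /mapP [j _ ->].
by rewrite inE /= -cats1 mem_cat negb_or mem_nseq inE /=; case: j.
Qed.

Definition good (x : cell) := (x != None) && ns x.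

Lemma all_good_outc i : all good (outc i).
Proof.
rewrite /outc /= all_map; apply/allP => s hs /=.
rewrite /good /ns /=; apply/negP => /eqP [es]; subst s.
by move: (Stop_Eseq i); rewrite hs.
Qed.

Lemma good_nsW (s : seq cell) : all good s -> all ns s.
Proof. by move=> /allP h; apply/allP => x /h /andP[]. Qed.
Lemma good_nbW (s : seq cell) : all good s -> all (fun x => x != None) s.
Proof. by move=> /allP h; apply/allP => x /h /andP[]. Qed.

Lemma good_nseq n x : good x -> all good (nseq n x).
Proof. by move=> g; rewrite all_nseq g orbT. Qed.

Lemma rev_nseq' T n (x : T) : rev (nseq n x) = nseq n x.
Proof. by rewrite rev_nseq. Qed.

Lemma catrev_nseq n x (l : seq cell) : catrev (nseq n x) l = nseq n x ++ l.
Proof. by rewrite catrevE rev_nseq. Qed.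

Lemma nseqSr T n (x : T) : nseq n.+1 x = rcons (nseq n x) x.
Proof. by elim: n => //= n ->. Qed.

Lemma in_nseq_eq (x y : cell) n : y \in nseq n x -> y = x.
Proof. by rewrite mem_nseq => /andP[_ /eqP]. Qed.

Lemma move_right_nseq q x y n l r :
  delta q x = Some (q, y, MoveR) ->
  reach (q, l, nseq n x ++ r) (q, nseq n y ++ l, r) n.
Proof.
move=> h; have := @move_right q (fun _ => y) (nseq n x) l r.
rewrite map_nseq catrev_nseq size_nseq; apply=> z /in_nseq_eq ->; exact: h.
Qed.

Lemma good_cb : good cb. Proof. by []. Qed.
Lemma good_ca : good ca. Proof. by []. Qed.
Lemma good_cc : good cc. Proof. by []. Qed.
Lemma good_co : good co. Proof. by []. Qed.
Lemma good_csp : good csp. Proof. by []. Qed.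
Hint Resolve good_cb good_ca good_cc good_co good_csp : core.

Lemma copy_loop a L R : all good R ->
  forall d j, j + d = a ->
  reach (C2, cst :: L, nseq j cc ++ nseq d cb ++ R ++ csp :: nseq j co)
        (C2, cst :: L, nseq a cc ++ R ++ csp :: nseq a co)
        (d * (5 * (a + size R + 2))).
Proof.
move=> HR; elim=> [|d IH] j hj.
  by rewrite addn0 in hj; subst j; rewrite mul0n /=; apply: reach_refl.
set K := 5 * (a + size R + 2).
have h1 := @move_right_nseq C2 cc cc j (cst :: L)
   (nseq d.+1 cb ++ R ++ csp :: nseq j co) erefl.
have h2 : stp (C2, nseq j cc ++ cst :: L, nseq d.+1 cb ++ R ++ csp :: nseq j co)
          = Some (WO, nseq j.+1 cc ++ cst :: L, nseq d cb ++ R ++ csp :: nseq j co).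
  by [].
have h3 := @append WO GC C2 co (nseq j.+1 cc) (nseq d cb ++ R ++ csp :: nseq j co) L
   (fun x => erefl) (fun x => erefl).
rewrite rev_nseq in h3.
have h4 := IH j.+1 (etrans (addSnnS j d) hj).
have e : rcons (nseq j.+1 cc ++ nseq d cb ++ R ++ csp :: nseq j co) co =
         nseq j.+1 cc ++ nseq d cb ++ R ++ csp :: nseq j.+1 co.
  by rewrite (nseqSr j co) -!cats1 -!catA.
rewrite e in h3.
have g : all good (nseq j.+1 cc ++ nseq d cb ++ R ++ csp :: nseq j co).
  by rewrite !all_cat /= !good_nseq //= HR.
have gr : all good (nseq d cb ++ R ++ csp :: nseq j co).
  by move: g; rewrite all_cat => /andP[].
have h3' := h3 (good_nbW gr) (good_nsW g) isT.
have := reach_trans (reach_trans (reach_trans h1 (reach_step h2)) h3') h4.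
apply: reach_le.
rewrite !size_cat !size_nseq /= size_nseq mulSn /K.
lia.
Qed.

Lemma round n i L : i < n ->
  reach (F, cst :: L, nseq i cb ++ nseq (n - i) ca ++ outc i)
        (F, cst :: L, nseq i.+1 cb ++ nseq (n - i.+1) ca ++ outc i.+1)
        (10 * (n + 3) ^ 3).
Proof.
move=> lt_in.
set a := i.+1.
set R := nseq (n - a) ca ++ outc i.
have gR : all good R by rewrite all_cat good_nseq // all_good_outc.
have eR : nseq (n - i) ca ++ outc i = ca :: R by rewrite /R /a -subnSK.
rewrite eR.
have h1 := @move_right_nseq F cb cb i (cst :: L) (ca :: R) erefl.
have h2 : stp (F, nseq i cb ++ cst :: L, ca :: R) = Some (WS, nseq a cb ++ cst :: L, R) by [].
have h3 := @append WS GC C2 csp (nseq a cb) R L (fun x => erefl) (fun x => erefl).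
rewrite rev_nseq in h3.
have g3 : all good (nseq a cb ++ R) by rewrite all_cat good_nseq.
have {}h3 := h3 (good_nbW gR) (good_nsW g3) isT.
have e3 : rcons (nseq a cb ++ R) csp = nseq 0 cc ++ nseq a cb ++ R ++ csp :: nseq 0 co.
  by rewrite -cats1 -catA.
rewrite e3 in h3.
have h4 := @copy_loop a L R gR a 0 erefl.
have [x [X' [eX [hx1 [hx2 gx]]]]] : exists x X', R ++ csp :: nseq a co = x :: X' /\
   stp (C2, nseq a cc ++ cst :: L, x :: X') = Some (GR, nseq a cc ++ cst :: L, x :: X') /\
   stp (Rst, nseq a cb ++ cst :: L, x :: X') = Some (WS2, nseq a cb ++ cst :: L, x :: X') /\
   good x.
  rewrite /R; case: (n - a) => [|k] /=.
    by do 2 eexists; split; first reflexivity.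
  by do 2 eexists; split; first reflexivity.
rewrite eX in h4.
have h5 := @move_right_nseq C2 cc cc a (cst :: L) (x :: X') erefl.
have h6 := reach_step hx1.
have gX : all good (x :: X') by rewrite -eX all_cat gR /= good_nseq.
have h7 := @bounce GR Rst (nseq a cc) x L X' (fun y => erefl).
rewrite rev_nseq in h7.
have g7 : all good (x :: nseq a cc) by rewrite /= gx good_nseq.
have {}h7 := h7 (good_nsW g7).
have h8 := @move_right_nseq Rst cc cb a (cst :: L) (x :: X') erefl.
have h9 := reach_step hx2.
have h10 := @append WS2 GF F csp (nseq a cb) (x :: X') L (fun x => erefl) (fun x => erefl).
rewrite rev_nseq in h10.
have g10 : all good (nseq a cb ++ x :: X') by rewrite all_cat good_nseq.
have {}h10 := h10 (good_nbW gX) (good_nsW g10) isT.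
have e10 : rcons (nseq a cb ++ x :: X') csp = nseq a cb ++ nseq (n - a) ca ++ outc a.
  by rewrite -eX /R /a outc_S -cats1 -!catA.
rewrite e10 in h10.
have := reach_trans (reach_trans (reach_trans (reach_trans (reach_trans (reach_trans
   (reach_trans (reach_trans (reach_trans h1 (reach_step h2)) h3) h4) h5) h6) h7) h8) h9) h10.
have sX : size (x :: X') = size R + 1 + a by rewrite -eX size_cat /= size_nseq; lia.
have sR : size R <= n + 2 + i * (i + 2).
  rewrite /R size_cat size_nseq /outc size_map /=.
  have := size_Eseq i; lia.
apply: reach_le.
clearbody R.
rewrite !size_cat !size_nseq sX.
move: (size R) sR => s sR.
have hs : s <= n * n + n + 2 by nia.
have ha : a <= n by [].
have hp : a * (5 * (a + s + 2)) <= n * (5 * (n + (n * n + n + 2) + 2)).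
  by apply: leq_mul => //; lia.
have hq : n * (5 * (n + (n * n + n + 2) + 2)) + 10 * (n * n + n + 2) + 20 * n + 60
          <= 10 * (n + 3) ^ 3.
  rewrite !expnS expn0; nia.
lia.
Qed.

Lemma rounds n L : forall i, i <= n ->
  reach (F, cst :: L, nseq n ca ++ outc 0)
        (F, cst :: L, nseq i cb ++ nseq (n - i) ca ++ outc i)
        (i * (10 * (n + 3) ^ 3)).
Proof.
elim=> [|i IH] hi; first by rewrite subn0 mul0n; apply: reach_refl.
rewrite mulSn addnC; apply: reach_trans (IH (ltnW hi)) (round L hi).
Qed.

Lemma final_phase n L :
  exists c, reach (F, cst :: L, nseq n cb ++ nseq (n - n) ca ++ outc n) c (3 * n + 4)
            /\ stp c = None /\ c = (Fin, nseq n co ++ cst :: L, outc n).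
Proof.
exists (Fin, nseq n co ++ cst :: L, outc n); split; last by split.
rewrite subnn /=.
set rest := [seq inj i | i <- Sep :: Eseq n].
have h1 := @move_right_nseq F cb cb n (cst :: L) (co :: rest) erefl.
have h2 : stp (F, nseq n cb ++ cst :: L, co :: rest) = Some (GFin, nseq n cb ++ cst :: L, co :: rest) by [].
have h3 := @bounce GFin Fin (nseq n cb) co L rest (fun y => erefl).
rewrite rev_nseq in h3.
have g3 : all good (co :: nseq n cb) by rewrite /= good_nseq.
have {}h3 := h3 (good_nsW g3).
have h4 := @move_right_nseq Fin cb co n (cst :: L) (co :: rest) erefl.
have := reach_trans (reach_trans (reach_trans h1 (reach_step h2)) h3) h4.
by apply: reach_le; rewrite size_nseq; lia.
Qed.

Definition sk (n : nat) : st := match n with 0 => S0 | 1 => S1 | _ => S2 end.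

Lemma count n L r :
  reach (S0, cst :: L, nseq n co ++ r) (sk n, nseq n ca ++ cst :: L, r) n.
Proof.
case: n => [|[|m]] /=; first exact: reach_refl.
  by apply: reach_step.
apply: (@reach_step_trans _ (S1, ca :: cst :: L, nseq m.+1 co ++ r)) => //.
apply: (@reach_step_trans _ (S2, ca :: ca :: cst :: L, nseq m co ++ r)) => //.
have := @move_right_nseq S2 co ca m (ca :: ca :: cst :: L) r erefl.
have -> : nseq m ca ++ [:: ca, ca, cst & L] = ca :: ca :: nseq m ca ++ cst :: L.
  by rewrite -[ca :: ca :: _]/(nseq 2 ca ++ _) catA -nseqD addnC nseqD.
done.
Qed.

Lemma junk_step n (y : sym) l rest : y != One ->
  stp (sk n, l, inj y :: rest) = Some (J, cx :: l, rest).
Proof.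
by case: y => [[|[|[|?]]] ?] //= _; case: n => [|[|n]].
Qed.

Definition gs (x : cell) : option sym := if x is Some (inl s) then Some s else None.

Lemma pmap_inj s : pmap gs (map inj s) = s.
Proof. by elim: s => //= x s ->. Qed.

Lemma pmap_work (s : seq cell) : all (fun x => gs x == None) s -> pmap gs s = [::].
Proof. by elim: s => //= x s IH /andP[/eqP -> /IH]. Qed.

Lemma pmap_rev (s : seq cell) : pmap gs (rev s) = rev (pmap gs s).
Proof.
elim: s => //= x s IH; rewrite rev_cons -cats1 pmap_cat IH.
by case: x => [[s'|w]|] /=; rewrite ?rev_cons ?cats1 ?cats0.
Qed.

Lemma out_eq (c : cfg) : @tape_output M c = pmap gs (catrev c.1.2 c.2).
Proof. by []. Qed.

Lemma enc_star n : enc_graph (star n) = nseq n One ++ One :: Sep :: Eseq n.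
Proof.
rewrite /enc_graph /star /Eseq /enc_nat -map_comp /=.
rewrite -cats1 -catA.
rewrite -[One :: nseq n One ++ _]/((One :: nseq n One) ++ _) -[One :: nseq n One]/(nseq n.+1 One).
rewrite nseqSr -cats1 -catA /=; congr (_ ++ _ :: _ :: flatten _).
apply/eq_in_map => j; rewrite mem_iota => /andP[_ hj] /=.
by rewrite inordK // -add1n.
Qed.

Lemma split_first (w : seq sym) :
  Stop \notin w \/ exists pre rest, w = pre ++ Stop :: rest /\ Stop \notin pre.
Proof.
elim: w => [|x w IH]; first by left.
case: (eqVneq x Stop) => [->|hx].
  by right; exists [::], w.
case: IH => [h|[pre [rest [-> h]]]].
  by left; rewrite inE negb_or eq_sym hx.
by right; exists (x :: pre), rest; rewrite inE negb_or eq_sym hx.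
Qed.

Lemma rest_cases (r : seq sym) :
  (exists n, r = nseq n One) \/
  exists n y r', r = nseq n One ++ y :: r' /\ y != One.
Proof.
elim: r => [|x r IH]; first by left; exists 0.
case: (eqVneq x One) => [->|hx]; last by right; exists 0, x, r.
case: IH => [[n ->]|[n [y [r' [-> hy]]]]]; first by left; exists n.+1.
by right; exists n.+1, y, r'.
Qed.

Lemma dA (s : sym) : s != Stop -> delta A (inj s) = Some (A, inj s, MoveR).
Proof. by case: s => [[|[|[|?]]] ?]. Qed.

Lemma phaseA pre rest : Stop \notin pre ->
  reach (A, [::], map inj (pre ++ Stop :: rest))
        (S0, cst :: rev (map inj pre), map inj rest) (size pre + 1).
Proof.
move=> hp; rewrite map_cat /=.
have := @move_right A id (map inj pre) [::] (cst :: map inj rest).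
rewrite map_id catrevE cats0 size_map => h.
apply: reach_trans (h _) (reach_step _) => //.
move=> x /mapP [s hs ->]; apply: dA.
by apply: contra hp => /eqP <-.
Qed.

Definition bad_cfg L (W : seq cell) := (Hlt, csp :: co :: W ++ cst :: L, [::] : seq cell).

Lemma bad_out pre W : all (fun x => gs x == None) W ->
  @tape_output M (bad_cfg (rev (map inj pre)) W) = pre ++ [:: Stop; One; Sep].
Proof.
move=> hW; rewrite out_eq /= catrevE pmap_cat pmap_rev pmap_cat /= (pmap_work hW).
by rewrite pmap_rev pmap_inj /= rev_cons revK -cats1 -catA.
Qed.

Lemma run_junk pre n y r' : Stop \notin pre -> y != One ->
  exists W, all (fun x => gs x == None) W /\
  reach (A, [::], map inj (pre ++ Stop :: nseq n One ++ y :: r'))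
        (bad_cfg (rev (map inj pre)) W) (size pre + n + size r' + 5).
Proof.
move=> hp hy; set L := rev (map inj pre).
have h1 := phaseA (nseq n One ++ y :: r') hp.
rewrite map_cat map_nseq /= in h1.
have h2 := @count n L (inj y :: map inj r').
have h3 := reach_step (junk_step n (nseq n ca ++ cst :: L) (map inj r') hy).
have dJ : forall x, x \in map inj r' -> delta J x = Some (J, cx, MoveR).
  by move=> x /mapP [s _ ->].
have h4 := @move_right J (fun _ => cx) (map inj r') (cx :: nseq n ca ++ cst :: L) [::] dJ.
rewrite cats0 in h4.
set X := catrev _ _ in h4.
have h5 : stp (J, X, [::]) = Some (T1, co :: X, [::]) by [].
have h6 : stp (T1, co :: X, [::]) = Some (Hlt, csp :: co :: X, [::]) by [].
exists (rev (map (fun _ => cx) (map inj r')) ++ cx :: nseq n ca); split.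
  by rewrite all_cat all_rev all_map /= all_nseq; apply/andP; split;
     [apply/allP => x | rewrite orbT].
have := reach_trans (reach_trans (reach_trans (reach_trans (reach_trans h1 h2) h3) h4)
   (reach_step h5)) (reach_step h6).
rewrite /bad_cfg /X catrevE -catA /=.
apply: reach_le; rewrite !size_map.
have ar a b : a + 1 + n + 1 + b + 1 + 1 <= a + n + b + 5 by lia.
exact: ar.
Qed.

Lemma run_small pre n : Stop \notin pre -> n <= 1 ->
  exists W, all (fun x => gs x == None) W /\
  reach (A, [::], map inj (pre ++ Stop :: nseq n One))
        (bad_cfg (rev (map inj pre)) W) (size pre + n + 3).
Proof.
move=> hp hn; set L := rev (map inj pre).
have h1 := phaseA (nseq n One) hp.
rewrite map_nseq in h1.
have h2 := @count n L [::].
rewrite cats0 in h2.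
have h3 : stp (sk n, nseq n ca ++ cst :: L, [::]) = Some (T1, co :: nseq n ca ++ cst :: L, [::]).
  by case: n hn {h1 h2} => [|[|]].
have h4 : stp (T1, co :: nseq n ca ++ cst :: L, [::]) =
          Some (Hlt, csp :: co :: nseq n ca ++ cst :: L, [::]) by [].
exists (nseq n ca); split; first by rewrite all_nseq orbT.
have := reach_trans (reach_trans (reach_trans h1 h2) (reach_step h3)) (reach_step h4).
by apply: reach_le; lia.
Qed.

Lemma main_out pre n :
  pmap gs (catrev (nseq n co ++ cst :: rev (map inj pre)) (outc n)) =
  pre ++ Stop :: enc_graph (star n).
Proof.
have e : nseq n co ++ cst :: rev (map inj pre) = rev (map inj (pre ++ Stop :: nseq n One)).
  by rewrite map_cat rev_cat /= rev_cons map_nseq rev_nseq -cats1 -catA.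
rewrite e catrevE revK /outc -map_cat pmap_inj enc_star -catA.
by [].
Qed.

Lemma run_main pre m : Stop \notin pre ->
  exists c, reach (A, [::], map inj (pre ++ Stop :: nseq m.+2 One)) c
                  (size pre + 5 * m.+2 + 10 + m.+2 * (10 * (m.+2 + 3) ^ 3))
    /\ stp c = None /\ @tape_output M c = pre ++ Stop :: enc_graph (star m.+2).
Proof.
move=> hp; set n := m.+2; set L := rev (map inj pre).
have h1 := phaseA (nseq n One) hp.
rewrite map_nseq in h1.
have h2 := @count n L [::].
rewrite cats0 in h2.
have h3 : stp (S2, nseq n ca ++ cst :: L, [::]) = Some (WS2, co :: nseq n ca ++ cst :: L, [::]) by [].
have h4 : stp (WS2, co :: nseq n ca ++ cst :: L, [::]) = Some (GF, nseq n ca ++ cst :: L, [:: co; csp]) by [].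
have h5 := @bounce GF F (nseq n ca) co L [:: csp] (fun y => erefl).
rewrite rev_nseq in h5.
have g5 : all good (co :: nseq n ca) by rewrite /= good_nseq.
have {}h5 := h5 (good_nsW g5).
have h6 := @rounds n L n (leqnn n).
have [c [h7 [h8 ec]]] := final_phase n L.
subst c.
exists (Fin, nseq n co ++ cst :: L, outc n); split; last split => //.
  have := reach_trans (reach_trans (reach_trans (reach_trans (reach_trans (reach_trans
     h1 h2) (reach_step h3)) (reach_step h4)) h5) h6) h7.
  apply: reach_le; rewrite size_nseq.
  have ar a X : a + 1 + n + 1 + 1 + (n + 2) + X + (3 * n + 4) <= a + 5 * n + 10 + X by lia.
  exact: ar.
rewrite out_eq; exact: main_out.
Qed.

Lemma le_pow4 N : N <= N ^ 4.
Proof. by case: N => // N; rewrite -{1}(expn1 N.+1) leq_pexp2l. Qed.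

Lemma main_bound p n :
  p + 5 * n + 10 + n * (10 * (n + 3) ^ 3) <= 300 * (p + 1 + n) ^ 4 + 300.
Proof.
set N := p + 1 + n.
have h1 : (n + 3) ^ 3 <= (3 * N) ^ 3 by rewrite leq_exp2r //; lia.
have h2 : n * (10 * (n + 3) ^ 3) <= N * (10 * (3 * N) ^ 3).
  by apply: leq_mul; [lia | rewrite leq_mul2l h1 orbT].
have h3 : N * (10 * (3 * N) ^ 3) = 270 * N ^ 4.
  by rewrite !expnMn !expnS !expn0; nia.
have h4 := le_pow4 N.
have h5 : p + 5 * n + 10 <= 16 * N by rewrite /N; lia.
lia.
Qed.

Lemma reach_halts w c b y : reach (A, [::], map inj w) c b -> stp c = None ->
  @tape_output M c = y -> exists k, halts_with M w k y /\ k <= b.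
Proof. by case=> k [hk e] hs ho; exists k; split => //; exists c. Qed.

Lemma PermRep_split w pre rest : PermRep w -> w = pre ++ Stop :: rest -> Stop \notin pre ->
  exists m (t : 'I_m -> 'I_m -> 'I_m) n, pre = enc_tab t /\ rest = nseq n One /\
    is_group_table t /\ nontrivial_hom_into t [set: {perm 'I_n}].
Proof.
case=> m [t [n [ew [g h]]]] ew' hp; rewrite ew' in ew.
have [e1 e2] := split_stop ew hp (notStop_tab t).
by exists m, t, n.
Qed.

Lemma TreeRep_split y pre g : TreeRep y -> y = pre ++ Stop :: g -> Stop \notin pre ->
  exists m (t : 'I_m -> 'I_m -> 'I_m) k (E : seq ('I_k * 'I_k)), pre = enc_tab t /\
    g = enc_graph E /\ is_group_table t /\ is_tree E /\ nontrivial_hom_into t (Aut_graph E).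
Proof.
case=> m [t [k [E [ey [gt [tr h]]]]]] ey' hp; rewrite ey' in ey.
have [e1 e2] := split_stop ey hp (notStop_tab t).
by exists m, t, k, E.
Qed.

Lemma Stop_in_PermRep w : PermRep w -> Stop \in w.
Proof. by case=> m [t [n [-> _]]]; rewrite mem_cat inE eqxx orbT. Qed.

Lemma Stop_in_TreeRep w : TreeRep w -> Stop \in w.
Proof. by case=> m [t [k [E [-> _]]]]; rewrite mem_cat inE eqxx orbT. Qed.

Lemma not_TreeRep_bad pre : Stop \notin pre -> ~ TreeRep (pre ++ [:: Stop; One; Sep]).
Proof.
move=> hp h; have [m [t [k [E [_ [eg [_ [_ hn]]]]]]]] := TreeRep_split h erefl hp.
have ek := graph_one_dec (esym eg); subst k.
exact: nontriv_small hn.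
Qed.

Theorem mainTheorem8 : poly_reducible PermRep TreeRep.
Proof.
exists M, 300, 4 => w.
have hN := le_pow4 (size w).
case: (split_first w) => [hw|[pre [rest [ew hp]]]].
  have dAw : forall x, x \in map inj w -> delta A x = Some (A, id x, MoveR).
    by move=> x /mapP [s hs ->]; apply: dA; apply: contra hw => /eqP <-.
  have h1 := @move_right A id (map inj w) [::] [::] dAw.
  rewrite cats0 map_id size_map in h1.
  have ho : @tape_output M (A, catrev (map inj w) [::], [::]) = w.
    by rewrite out_eq /= !catrevE !cats0 revK pmap_inj.
  have [k [hh hk]] := reach_halts h1 erefl ho.
  exists k, w; split => //; split; first by lia.
  split; first by move/Stop_in_PermRep; rewrite (negbTE hw).
  by move/Stop_in_TreeRep; rewrite (negbTE hw).
subst w; move: hN.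
case: (rest_cases rest) => [[n ->]|[n [y [r' [-> hy]]]]] hN; last first.
  have [W [hW hr]] := run_junk n r' hp hy.
  have [k [hh hk]] := reach_halts hr erefl (bad_out pre hW).
  exists k, (pre ++ [:: Stop; One; Sep]); split => //; split.
    have sw : size (pre ++ Stop :: nseq n One ++ y :: r') = size pre + n + size r' + 2.
      by rewrite size_cat /= size_cat size_nseq /=; lia.
    move: hk sw hN; move: (size pre) (size r') (size _) => a b c; lia.
  split; last by move/(not_TreeRep_bad hp).
  move=> h; have [mm [t [n' [_ [e _]]]]] := PermRep_split h erefl hp.
  have : y \in nseq n' One by rewrite -e mem_cat inE eqxx orbT.
  by rewrite mem_nseq => /andP[_ /eqP ey]; rewrite ey eqxx in hy.
move: hN; case: n => [|[|m]] hN.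
- have [W [hW hr]] := @run_small pre 0 hp isT.
  have [k [hh hk]] := reach_halts hr erefl (bad_out pre hW).
  exists k, (pre ++ [:: Stop; One; Sep]); split => //; split.
    move: hk hN; rewrite size_cat /=; move: (size pre) => a; lia.
  split; last by move/(not_TreeRep_bad hp).
  move=> h; have [mm [t [n' [_ [e [_ hn]]]]]] := PermRep_split h erefl hp.
  have := congr1 size e; rewrite !size_nseq /= => en; subst n'.
  by case: (nontriv_small (isT : 0 <= 1) hn).
- have [W [hW hr]] := @run_small pre 1 hp isT.
  have [k [hh hk]] := reach_halts hr erefl (bad_out pre hW).
  exists k, (pre ++ [:: Stop; One; Sep]); split => //; split.
    move: hk hN; rewrite size_cat /=; move: (size pre) => a; lia.
  split; last by move/(not_TreeRep_bad hp).
  move=> h; have [mm [t [n' [_ [e [_ hn]]]]]] := PermRep_split h erefl hp.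
  have := congr1 size e; rewrite !size_nseq /= => en; subst n'.
  by case: (nontriv_small (isT : 1 <= 1) hn).
have [c [hr [hs ho]]] := @run_main pre m hp.
have [k [hh hk]] := reach_halts hr hs ho.
exists k, (pre ++ Stop :: enc_graph (star m.+2)); split => //; split.
  apply: leq_trans hk _; rewrite size_cat /= size_nseq.
  have := main_bound (size pre) m.+2.
  by rewrite -[size pre + 1 + _]addnA add1n.
split.
  move=> h; have [mm [t [n' [e1 [e2 [gt hn]]]]]] := PermRep_split h erefl hp.
  have := congr1 size e2; rewrite !size_nseq => en; subst n'.
  exists mm, t, m.+3, (star m.+2); split; first by rewrite e1.
  by split => //; split; [exact: star_tree | apply/nontriv_star].
move=> h; have [mm [t [k' [E [e1 [eg [gt [tr hn]]]]]]]] := TreeRep_split h erefl hp.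
have [tr' hn'] := @graph_star_dec k' E m.+2
  (fun k E => is_tree E /\ nontrivial_hom_into t (Aut_graph E)) (esym eg) (conj tr hn).
exists mm, t, m.+2; split; first by rewrite e1.
by split => //; apply/nontriv_star.
Qed.
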